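(* Let $k\ge 2$ be an integer and $\sigma^2>0$. Let $X_1,\dots,X_k$ be real-valued random variables with finite second moments (the values of one fixed weight coordinate in the $k$ model instances), and let $$S^2=\frac{1}{k-1}\sum_{u=1}^k\Bigl(X_u-\tfrac1k\textstyle\sum_{v=1}^k X_v\Bigr)^2$$ be their unbiased sample variance. Assume $\mathbb E[S^2]=\frac{k}{2}\sigma^2$. Perform one ''draw and discard'' update: choose an index $j$ uniformly at random from $\{1,\dots,k\}$, choose an index $l$ uniformly at random from $\{1,\dots,k\}$ (with $j$, $l$ independent of each other and of everything else), draw a noise variable $r$ independent of $(X_1,\dots,X_k,j,l)$ with $\mathbb E[r]=0$ and $\mathrm{Var}(r)=\sigma^2$, and define new values $X'_l=X_j+r$ and $X'_u=X_u$ for $u\neq l$. Then the unbiased sample variance $S'^2$ of $X'_1,\dots,X'_k$ satisfies $\mathbb E[S'^2]=\frac{k}{2}\sigma^2$. Consequently, applying the update repeatedly (with fresh independent $j,l,r$ each time), the expected intra-model sample variance stays equal to $\frac{k}{2}\sigma^2$ after any number of updates; the same holds coordinatewise for vector-valued weights $B=(B_1,\dots,B_p)$ with per-coordinate noise variances $\sigma_i^2$.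
   Context: This models the server side of ''Draw and Discard'' machine learning: the server keeps $k$ instances of a model; at each step a uniformly random instance is sent to a client, which returns it with independent zero-mean noise added (variance $\sigma^2$ per coordinate), and the returned model overwrites a uniformly random one of the $k$ instances (possibly the one that was drawn). *)

(* Defs.v *)
(* No measure theory is installed, so
   an expectation is modelled abstractly as a normalised, positive, linear
   functional [E] on a class [Int] of integrable random variables. *)
From Stdlib Require Import Reals Lra.
Open Scope R_scope.

Fixpoint sumR (n : nat) (f : nat -> R) : R :=
  match n with
  | O => 0
  | S m => sumR m f + f m
  end.

Record IsExpectation {Omega : Type} (Int : (Omega -> R) -> Prop)
    (E : (Omega -> R) -> R) : Prop := {
  int_const : forall c : R, Int (fun _ => c);
  int_add : forall f g, Int f -> Int g -> Int (fun w => f w + g w);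
  int_scal : forall (c : R) f, Int f -> Int (fun w => c * f w);
  E_const : forall c : R, E (fun _ => c) = c;
  E_add : forall f g, Int f -> Int g -> E (fun w => f w + g w) = E f + E g;
  E_scal : forall (c : R) f, Int f -> E (fun w => c * f w) = c * E f;
  E_nonneg : forall f, Int f -> (forall w, 0 <= f w) -> 0 <= E f
}.

Definition mean (k : nat) (x : nat -> R) : R := / INR k * sumR k x.

Definition sample_var (k : nat) (x : nat -> R) : R :=
  / (INR k - 1) * sumR k (fun u => (x u - mean k x) ^ 2).

Definition dd_update (x : nat -> R) (j l : nat) (r : R) : nat -> R :=
  fun u => if Nat.eqb u l then x j + r else x u.

(* Main.v *)
Require Import Defs.
From Stdlib Require Import Reals Lra Lia FunctionalExtensionality.
Open Scope R_scope.

Lemma sumR_ext_lt n f g : (forall i, (i < n)%nat -> f i = g i) -> sumR n f = sumR n g.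
Proof.
  induction n; intros H; cbn [sumR]; [reflexivity|].
  rewrite IHn by (intros; apply H; lia). rewrite (H n) by lia. reflexivity.
Qed.

Lemma sumR_ext n f g : (forall i, f i = g i) -> sumR n f = sumR n g.
Proof. intros; apply sumR_ext_lt; auto. Qed.

Lemma quad_sum n a b c (x : nat -> R) :
  sumR n (fun l => a + b * x l + c * x l ^ 2)
  = INR n * a + b * sumR n x + c * sumR n (fun l => x l ^ 2).
Proof.
  induction n; cbn [sumR]; [simpl; ring|]. rewrite IHn, S_INR. ring.
Qed.

Lemma sum_scal n c f : sumR n (fun i => c * f i) = c * sumR n f.
Proof. induction n; cbn [sumR]; [ring|]. rewrite IHn; ring. Qed.

Lemma sum_scal_r n c f : sumR n (fun i => f i * c) = sumR n f * c.
Proof. induction n; cbn [sumR]; [ring|]. rewrite IHn; ring. Qed.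

Lemma sum_mul n f g :
  sumR n f * sumR n g = sumR n (fun u => sumR n (fun v => f u * g v)).
Proof.
  rewrite <- sum_scal_r. apply sumR_ext; intros u. rewrite sum_scal. ring.
Qed.

Lemma double_sum n a b c d e f (x : nat -> R) :
  sumR n (fun j => sumR n (fun l =>
     a + b * x j + c * x j ^ 2 + d * x l + e * x l ^ 2 + f * x j * x l))
  = INR n * INR n * a + INR n * b * sumR n x + INR n * c * sumR n (fun l => x l ^ 2)
    + INR n * d * sumR n x + INR n * e * sumR n (fun l => x l ^ 2)
    + f * sumR n x * sumR n x.
Proof.
  set (TT := sumR n x). set (PP := sumR n (fun l => x l ^ 2)).
  rewrite (sumR_ext n _ (fun j => (INR n * a + d * TT + e * PP) + (INR n * b + f * TT) * x j
                                  + (INR n * c) * x j ^ 2)).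
  - rewrite quad_sum. fold TT PP. ring.
  - intros j.
    rewrite (sumR_ext n _ (fun l => (a + b * x j + c * x j ^ 2) + (d + f * x j) * x l + e * x l ^ 2)).
    + rewrite quad_sum. fold TT PP. ring.
    + intros; ring.
Qed.

Lemma sum_upd n (f : R -> R) x j l t :
  sumR n (fun u => f (dd_update x j l t u))
  = sumR n (fun u => f (x u)) + (if (l <? n)%nat then f (x j + t) - f (x l) else 0).
Proof.
  induction n; cbn [sumR].
  - simpl. ring.
  - rewrite IHn. unfold dd_update.
    destruct (Nat.eqb_spec n l), (Nat.ltb_spec l n), (Nat.ltb_spec l (S n)); subst;
      try lia; ring.
Qed.

Lemma sv_formula k x : INR k <> 0 ->
  sample_var k x = / (INR k - 1) * (sumR k (fun u => x u ^ 2) - / INR k * (sumR k x) ^ 2).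
Proof.
  intros Hk. unfold sample_var, mean. f_equal.
  rewrite (sumR_ext k _ (fun u => (/ INR k * sumR k x) ^ 2 + (-2 * (/ INR k * sumR k x)) * x u
                                   + 1 * x u ^ 2)) by (intros; ring).
  rewrite quad_sum. field. auto.
Qed.

Lemma int_sum {Omega} (Int : (Omega -> R) -> Prop) E n (F : nat -> Omega -> R) :
  IsExpectation Int E -> (forall i, (i < n)%nat -> Int (F i)) ->
  Int (fun w => sumR n (fun i => F i w)).
Proof.
  intros HE. induction n; intros H; cbn [sumR].
  - apply (int_const _ _ HE).
  - apply (int_add _ _ HE); [apply IHn; intros; apply H; lia | apply H; lia].
Qed.

Theorem theorem1 (k : nat) (sigma2 : R)
  (Omega1 : Type) (Int1 : (Omega1 -> R) -> Prop) (E1 : (Omega1 -> R) -> R)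
  (Omega2 : Type) (Int2 : (Omega2 -> R) -> Prop) (E2 : (Omega2 -> R) -> R)
  (X : Omega1 -> nat -> R) (r : Omega2 -> R) :
  (2 <= k)%nat ->
  0 < sigma2 ->
  IsExpectation Int1 E1 ->
  IsExpectation Int2 E2 ->
  (* finite second moments of the X_u (hence integrable X_u and X_u X_v) *)
  (forall u, (u < k)%nat -> Int1 (fun w => X w u)) ->
  (forall u v, (u < k)%nat -> (v < k)%nat -> Int1 (fun w => X w u * X w v)) ->
  (* noise: mean 0, variance sigma2 *)
  Int2 r ->
  Int2 (fun w => r w ^ 2) ->
  E2 r = 0 ->
  E2 (fun w => r w ^ 2) - (E2 r) ^ 2 = sigma2 ->
  E1 (fun w => sample_var k (X w)) = INR k / 2 * sigma2 ->
  E1 (fun w =>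
        / INR k * sumR k (fun j =>
          / INR k * sumR k (fun l =>
            E2 (fun w' => sample_var k (dd_update (X w) j l (r w'))))))
  = INR k / 2 * sigma2.
Proof.
  intros Hk Hs HE1 HE2 HX1 HX2 Hr1 Hr2 Er Vr ES.
  assert (HK : 2 <= INR k) by (replace 2 with (INR 2) by (simpl; ring); apply le_INR; auto).
  set (K := INR k) in *.
  assert (HK0 : K <> 0) by lra. assert (HK1 : K - 1 <> 0) by lra.
  assert (Er2 : E2 (fun w => r w ^ 2) = sigma2) by (rewrite Er in Vr; lra).
  assert (HE2c : forall x j l, (l < k)%nat ->
    E2 (fun w' => sample_var k (dd_update x j l (r w')))
    = / (K - 1) * ((sumR k (fun u => x u ^ 2) - x l ^ 2 + x j ^ 2
                    - / K * (sumR k x - x l + x j) ^ 2) + (1 - / K) * sigma2)).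
  { intros x j l Hl.
    set (PP := sumR k (fun u => x u ^ 2)). set (TT := sumR k x).
    set (C0 := / (K - 1) * (PP - x l ^ 2 + x j ^ 2 - / K * (TT - x l + x j) ^ 2)).
    set (C1 := / (K - 1) * (2 * x j - 2 * / K * (TT - x l + x j))).
    set (C2 := / (K - 1) * (1 - / K)).
    assert (Hf : (fun w' => sample_var k (dd_update x j l (r w')))
                 = fun w' => C0 + (C1 * r w' + C2 * r w' ^ 2)).
    { apply functional_extensionality; intros w'.
      rewrite sv_formula by exact HK0.
      pose proof (sum_upd k (fun z => z ^ 2) x j l (r w')) as h1.
      pose proof (sum_upd k (fun z => z) x j l (r w')) as h2.
      cbv beta in h1, h2.
      assert (Hlt : (l <? k)%nat = true) by (apply Nat.ltb_lt; auto).
      rewrite Hlt in h1, h2.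
      change (sumR k (dd_update x j l (r w'))) with (sumR k (fun u => dd_update x j l (r w') u)).
      rewrite h1, h2. fold PP.
      change (sumR k (fun u => x u)) with TT.
      unfold C0, C1, C2. fold K. field. split; auto. }
    rewrite Hf.
    rewrite (E_add _ _ HE2 (fun _ => C0) (fun w => C1 * r w + C2 * r w ^ 2)).
    2: apply (int_const _ _ HE2).
    2: apply (int_add _ _ HE2); apply (int_scal _ _ HE2); auto.
    rewrite (E_const _ _ HE2).
    rewrite (E_add _ _ HE2 (fun w => C1 * r w) (fun w => C2 * r w ^ 2))
      by (apply (int_scal _ _ HE2); auto).
    rewrite (E_scal _ _ HE2 C1 r Hr1).
    rewrite (E_scal _ _ HE2 C2 (fun w => r w ^ 2) Hr2).
    rewrite Er, Er2. unfold C0, C2. fold PP TT. ring. }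
  assert (Hpt : forall x,
    / K * sumR k (fun j => / K * sumR k (fun l =>
            E2 (fun w' => sample_var k (dd_update x j l (r w')))))
    = (1 - 2 / (K * K)) * sample_var k x + sigma2 / K).
  { intros x.
    set (PP := sumR k (fun u => x u ^ 2)). set (TT := sumR k x).
    set (D := / (K * (K - 1))).
    rewrite (sumR_ext k _ (fun j => sumR k (fun l =>
       D * (PP + (1 - / K) * sigma2 - / K * TT ^ 2) + D * (-2 * / K * TT) * x j
       + D * (1 - / K) * x j ^ 2 + D * (2 * / K * TT) * x l + D * (-1 - / K) * x l ^ 2
       + D * (2 * / K) * x j * x l))).
    - rewrite double_sum. fold TT PP. rewrite sv_formula by exact HK0. fold PP TT K.
      unfold D. field. split; auto.
    - intros j. rewrite <- sum_scal. apply sumR_ext_lt. intros l Hl.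
      rewrite HE2c by exact Hl. fold PP TT. unfold D. field. split; auto. }
  assert (Hint : Int1 (fun w => sample_var k (X w))).
  { assert (Heq : (fun w => sample_var k (X w)) =
       fun w => / (K - 1) * (sumR k (fun u => X w u * X w u)
                 + (- / K) * sumR k (fun u => sumR k (fun v => X w u * X w v)))).
    { apply functional_extensionality; intros w.
      rewrite sv_formula by exact HK0. fold K.
      rewrite <- sum_mul. rewrite (sumR_ext k (fun u => X w u ^ 2) (fun u => X w u * X w u))
        by (intros; ring). ring. }
    rewrite Heq. apply (int_scal _ _ HE1). apply (int_add _ _ HE1).
    - apply (int_sum _ E1 k (fun u w => X w u * X w u) HE1). intros; auto.
    - apply (int_scal _ _ HE1).
      apply (int_sum _ E1 k (fun u w => sumR k (fun v => X w u * X w v)) HE1).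
      intros u Hu. apply (int_sum _ E1 k (fun v w => X w u * X w v) HE1). intros; auto. }
  assert (Hfun : (fun w => / K * sumR k (fun j => / K * sumR k (fun l =>
            E2 (fun w' => sample_var k (dd_update (X w) j l (r w'))))))
     = fun w => (fun w => (1 - 2 / (K * K)) * sample_var k (X w)) w + (fun _ => sigma2 / K) w).
  { apply functional_extensionality; intros w. apply Hpt. }
  rewrite Hfun.
  rewrite (E_add _ _ HE1).
  - rewrite (E_scal _ _ HE1 _ _ Hint), (E_const _ _ HE1), ES. fold K. field. auto.
  - apply (int_scal _ _ HE1); auto.
  - apply (int_const _ _ HE1).
Qed.
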